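(* For every unital formal multiplication $F$ on $V$ there exists a unique right alternative unital formal multiplication $F_0$ on $V$ that is similar to $F$, i.e. with $F_0|_{k[V]\otimes V}=F|_{k[V]\otimes V}$.
   Context: $k$ is a field of characteristic $0$; $k[V]$ is the symmetric algebra of $V$ with the coalgebra structure in which elements of $V$ are primitive, counit $\epsilon$ (degree-0 projection), $\pi_V$ the projection onto $V$, Sweedler notation. A unital formal multiplication on $V$ is a linear map $F\colon k[V]\otimes k[V]\to V$ with $F(1\otimes1)=0$ and $F(\mu\otimes1)=\pi_V(\mu)=F(1\otimes\mu)$; $F'\colon k[V]\otimes k[V]\to k[V]$, $F'(\xi)=\sum_{n\ge0}\frac1{n!}F(\xi_{(1)})\cdots F(\xi_{(n)})$, is the induced coalgebra morphism. $F$ is right alternative if $\sum F\big(F'(\mu\otimes\nu_{(1)})\otimes\nu_{(2)}\big)=\sum F\big(\mu\otimes F'(\nu_{(1)}\otimes\nu_{(2)})\big)$ for all $\mu,\nu\in k[V]$ (the formal identity $(\mathbf{x}\mathbf{y})\mathbf{y}=\mathbf{x}(\mathbf{y}\mathbf{y})$). Two unital formal multiplications on $V$ are similar if their restrictions to $k[V]\otimes V\subset k[V]\otimes k[V]$ coincide. *)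

(* Defs.v *)
From HB Require Import structures.
From mathcomp Require Import all_boot all_order all_algebra.
Set Implicit Arguments. Unset Strict Implicit. Unset Printing Implicit Defensive.
Import Order.TTheory GRing.Theory Num.Theory.
Local Open Scope ring_scope.

(* Representation of k[V] (symmetric algebra): a monomial x1...xp is a
   [seq V]; a linear map k[V] (x) k[V] -> V is the same as a family of maps
   on pairs of monomials that is multilinear and symmetric in each block
   (universal property of S^p V (x) S^q V). *)

Section FormalMul.
Variables (k : fieldType) (V : lmodType k).

Definition sym_multilinear (G : seq V -> V) : Prop :=
  (forall s s' : seq V, perm_eq s s' -> G s = G s') /\
  (forall (s1 s2 : seq V) (a : k) (x y : V),
      G (s1 ++ (a *: x + y) :: s2) = a *: G (s1 ++ x :: s2) + G (s1 ++ y :: s2)).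

Definition bilin_on_kV (F : seq V -> seq V -> V) : Prop :=
  (forall t, sym_multilinear (fun s => F s t)) /\
  (forall s, sym_multilinear (fun t => F s t)).

Definition piV (s : seq V) : V := if s is [:: x] then x else 0.

Definition unital_formal_mul (F : seq V -> seq V -> V) : Prop :=
  [/\ bilin_on_kV F, F [::] [::] = 0,
      forall s, F s [::] = piV s &
      forall s, F [::] s = piV s].

(* The iterated coproduct of s into n tensor factors is
   sum_f (part s f 0) (x) ... (x) (part s f (n-1)). *)
Definition part (s : seq V) (n : nat) (f : {ffun 'I_(size s) -> 'I_n}) (i : 'I_n)
  : seq V :=
  [seq nth 0 s (val j) | j <- enum 'I_(size s) & f j == i].

(* Fp_lin F L s t = L (F'(s (x) t)), for L : k[V] -> V linear (given on
   monomials).  F'(xi) = sum_n 1/n! F(xi_(1)) ... F(xi_(n)); the terms with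
   n > size s + size t vanish (some tensor factor is 1 (x) 1 and F(1(x)1)=0),
   so the sum is truncated there. *)
Definition Fp_lin (F : seq V -> seq V -> V) (L : seq V -> V) (s t : seq V) : V :=
  \sum_(n < (size s + size t).+1)
     (n`!%:R : k)^-1 *:
     \sum_(f : {ffun 'I_(size s) -> 'I_n})
       \sum_(g : {ffun 'I_(size t) -> 'I_n})
          L [seq F (part (s:=s) f i) (part (s:=t) g i) | i <- enum 'I_n].

(* Right alternativity, on monomials mu = s, nu = t (both sides are linear
   in mu and nu).  The coproduct of t is sum_h part t h 0 (x) part t h 1. *)
Definition right_alternative (F : seq V -> seq V -> V) : Prop :=
  forall s t : seq V,
    \sum_(h : {ffun 'I_(size t) -> 'I_2})
       Fp_lin F (fun w => F w (part (s:=t) h ord_max)) s (part (s:=t) h ord0)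
    = \sum_(h : {ffun 'I_(size t) -> 'I_2})
       Fp_lin F (fun w => F s w) (part (s:=t) h ord0) (part (s:=t) h ord_max).

Definition similar_fm (F G : seq V -> seq V -> V) : Prop :=
  forall (s : seq V) (y : V), F s [:: y] = G s [:: y].

End FormalMul.

(* Main.v *)
Require Import Defs.
From HB Require Import structures.
From mathcomp Require Import all_boot all_order all_algebra all_fingroup.
From mathcomp Require Import zify.
Set Implicit Arguments. Unset Strict Implicit. Unset Printing Implicit Defensive.
Import GRing.Theory.
Local Open Scope ring_scope.

Section Main.
Variables (k : fieldType) (V : lmodType k).
Implicit Types (s t a b w : seq V) (G : seq V -> V) (F : seq V -> seq V -> V).

Lemma sm_zero G : sym_multilinear G -> forall s1 s2, G (s1 ++ 0 :: s2) = 0.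
Proof.
move=> hG s1 s2; have := hG.2 s1 s2 1 0 0; rewrite !scale1r addr0 => e.
by apply: (addrI (G (s1 ++ 0 :: s2))); rewrite addr0 -e.
Qed.

Lemma sm_mem0 G : sym_multilinear G -> forall w, 0 \in w -> G w = 0.
Proof.
move=> hG w /perm_to_rem hp; rewrite (hG.1 _ _ hp).
exact: (sm_zero hG [::]).
Qed.

Lemma map_split (I : eqType) (W Z : Type) (l : seq I) (i0 : I) (e : Z -> I -> W)
  (z0 : Z) : uniq l -> i0 \in l -> (forall i z, i != i0 -> e z i = e z0 i) ->
  exists Q1 Q2, forall z, map (e z) l = Q1 ++ e z i0 :: Q2.
Proof.
move=> ul il he; case/splitPr: il ul => l1 l2 ul.
rewrite cat_uniq /= in ul; case/and4P: ul => _ hn hn2 _.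
have n1 : i0 \notin l1 by apply: contra hn => h; rewrite /= h.
exists (map (e z0) l1), (map (e z0) l2) => z; rewrite map_cat /=.
congr (_ ++ _ :: _); apply/eq_in_map => i hi; apply: he.
  by apply: contraNneq n1 => <-.
by apply: contraNneq hn2 => <-.
Qed.

Definition partN p s m (f : {ffun 'I_p -> 'I_m}) (i : 'I_m) : seq V :=
  [seq nth 0 s (val j) | j <- enum 'I_p & f j == i].

Definition FpTN F (L : seq V -> V) p s q t m :=
  \sum_(f : {ffun 'I_p -> 'I_m}) \sum_(g : {ffun 'I_q -> 'I_m})
     L [seq F (partN s f i) (partN t g i) | i <- enum 'I_m].

Lemma Fp_linE F L s t : Fp_lin F L s t =
  \sum_(m < (size s + size t).+1) (m`!%:R)^-1 *: FpTN F L (size s) s (size t) t m.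
Proof. by []. Qed.

Lemma partN_size p s m (f : {ffun 'I_p -> 'I_m}) i : (size (partN s f i) <= p)%N.
Proof. by rewrite size_map size_filter (leq_trans (count_size _ _)) // size_enum_ord. Qed.

Lemma map_nth_enum s : [seq nth 0 s (val j) | j <- enum 'I_(size s)] = s.
Proof. by rewrite (map_comp (nth 0 s) val) val_enum_ord -/(mkseq _ _) mkseq_nth. Qed.

Lemma partN_all p s m (f : {ffun 'I_p -> 'I_m}) i :
  size s = p -> (forall j, f j = i) -> partN s f i = s.
Proof.
move=> ? hf; subst p; rewrite /partN (@eq_filter _ _ predT) ?filter_predT ?map_nth_enum //.
by move=> j; rewrite /= hf eqxx.
Qed.

Lemma partN_none p s m (f : {ffun 'I_p -> 'I_m}) i :
  (forall j, f j != i) -> partN s f i = [::].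
Proof.
move=> hf; rewrite /partN (@eq_filter _ _ pred0) ?filter_pred0 //.
by move=> j; rewrite /= (negbTE (hf j)).
Qed.


Lemma nth_mid s1 s2 (z z' : V) (j : nat) : j != size s1 ->
  nth 0 (s1 ++ z :: s2) j = nth 0 (s1 ++ z' :: s2) j.
Proof.
move=> hj; rewrite !nth_cat; case: ltnP => // h.
case e: (j - size s1)%N => [|n] //=.
by move/eqP: e; rewrite subn_eq0 => e; case/eqP: hj; apply/eqP; rewrite eqn_leq e h.
Qed.

Lemma nth_at s1 s2 (z : V) : nth 0 (s1 ++ z :: s2) (size s1) = z.
Proof. by rewrite nth_cat ltnn subnn. Qed.

Section Split.
Variables (s1 s2 : seq V) (m : nat).
Let p := (size s1 + (size s2).+1)%N.
Lemma j0_lt : (size s1 < p)%N. Proof. by rewrite /p addnS ltnS leq_addr. Qed.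
Definition j0 : 'I_p := Ordinal j0_lt.

Lemma partN_other (f : {ffun 'I_p -> 'I_m}) i z z' : i != f j0 ->
  partN (s1 ++ z :: s2) f i = partN (s1 ++ z' :: s2) f i.
Proof.
move=> hi; apply/eq_in_map => j; rewrite mem_filter => /andP [/eqP hj _].
apply: nth_mid; apply: contra hi => /eqP e.
by rewrite -hj; apply/eqP; congr (f _); apply: val_inj.
Qed.

Lemma partN_mid (f : {ffun 'I_p -> 'I_m}) :
  exists P1 P2, forall z, partN (s1 ++ z :: s2) f (f j0) = P1 ++ z :: P2.
Proof.
have := @map_split _ _ _ [seq j <- enum 'I_p | f j == f j0] j0
  (fun z (j : 'I_p) => nth 0 (s1 ++ z :: s2) (val j)) 0.
rewrite filter_uniq ?enum_uniq // mem_filter eqxx mem_enum => /(_ isT isT).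
case=> [i z hi|P1 [P2 hP]]; first by apply: nth_mid; apply: contra hi => /eqP e;
  apply/eqP/val_inj.
by exists P1, P2 => z; rewrite /partN hP /= nth_at.
Qed.

Lemma FpTN_lin1 F L q t : (forall b, sym_multilinear (fun a => F a b)) ->
  sym_multilinear L -> forall (a : k) x y,
  FpTN F L p (s1 ++ (a *: x + y) :: s2) q t m =
  a *: FpTN F L p (s1 ++ x :: s2) q t m + FpTN F L p (s1 ++ y :: s2) q t m.
Proof.
move=> hF hL a x y; rewrite /FpTN scaler_sumr -big_split; apply: eq_bigr => f _.
rewrite scaler_sumr -big_split; apply: eq_bigr => g _ /=.
have [P1 [P2 hP]] := partN_mid f.
have := @map_split _ _ _ (enum 'I_m) (f j0)
  (fun z i => F (partN (s1 ++ z :: s2) f i) (partN t g i)) 0.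
rewrite enum_uniq mem_enum => /(_ isT isT).
case=> [i z hi|Q1 [Q2 hQ]]; first by rewrite (partN_other z 0 hi).
by rewrite !hQ !hP (hF _).2 (hL.2).
Qed.
End Split.

Lemma FpTN_linL F L L1 L2 p s q t m (a : k) :
  (forall w, L w = a *: L1 w + L2 w) ->
  FpTN F L p s q t m = a *: FpTN F L1 p s q t m + FpTN F L2 p s q t m.
Proof.
move=> hL; rewrite /FpTN scaler_sumr -big_split; apply: eq_bigr => f _.
by rewrite scaler_sumr -big_split; apply: eq_bigr => g _ /=.
Qed.

Lemma Fp_lin_linL F L L1 L2 s t (a : k) :
  (forall w, L w = a *: L1 w + L2 w) ->
  Fp_lin F L s t = a *: Fp_lin F L1 s t + Fp_lin F L2 s t.
Proof.
move=> hL; rewrite !Fp_linE scaler_sumr -big_split; apply: eq_bigr => m _.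
by rewrite (FpTN_linL _ _ _ _ _ _ hL) scalerDr !scalerA mulrC.
Qed.

Lemma Fp_lin_lin1 F L : (forall b, sym_multilinear (fun a => F a b)) ->
  sym_multilinear L -> forall s1 s2 t (a : k) x y,
  Fp_lin F L (s1 ++ (a *: x + y) :: s2) t =
  a *: Fp_lin F L (s1 ++ x :: s2) t + Fp_lin F L (s1 ++ y :: s2) t.
Proof.
move=> hF hL s1 s2 t a x y; rewrite !Fp_linE !size_cat /=.
rewrite scaler_sumr -big_split; apply: eq_bigr => m _.
by rewrite (FpTN_lin1 _ _ _ _ _ hF hL) scalerDr !scalerA mulrC.
Qed.

Lemma perm_map_enum p (sg : {perm 'I_p}) : perm_eq (map sg (enum 'I_p)) (enum 'I_p).
Proof.
apply: uniq_perm; rewrite ?(map_inj_uniq (@perm_inj _ sg)) ?enum_uniq //.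
move=> j; rewrite mem_enum; apply/mapP; exists ((sg^-1)%g j); rewrite ?mem_enum //.
by rewrite permKV.
Qed.

Lemma partN_perm p s s' (sg : {perm 'I_p}) m (f : {ffun 'I_p -> 'I_m}) i :
  (forall j : 'I_p, nth 0 s' j = nth 0 s (sg j)) ->
  perm_eq (partN s' f i) (partN s [ffun j => f ((sg^-1)%g j)] i).
Proof.
move=> hs; rewrite /partN (eq_map (g := fun j : 'I_p => nth 0 s (val (sg j))));
  last by move=> j; rewrite hs.
rewrite (map_comp (fun j : 'I_p => nth 0 s (val j)) sg); apply: perm_map.
have -> : [seq sg i0 | i0 <- [seq j <- enum 'I_p | f j == i]] =
  [seq j <- map sg (enum 'I_p) | [ffun j => f ((sg^-1)%g j)] j == i].
  rewrite [RHS]filter_map; apply: (congr1 (map sg)); apply: eq_filter => j /=; by rewrite ffunE permK.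
by apply: perm_filter; apply: perm_map_enum.
Qed.

Lemma ffun_perm_inj p m (sg : {perm 'I_p}) :
  injective (fun f : {ffun 'I_p -> 'I_m} => [ffun j => f ((sg^-1)%g j)]).
Proof.
move=> f1 f2 e; apply/ffunP => j.
by have := congr1 (fun f : {ffun 'I_p -> 'I_m} => f (sg j)) e; rewrite /= !ffunE permK.
Qed.

Lemma FpTN_perm1 F L p s s' q t m (sg : {perm 'I_p}) :
  (forall b, sym_multilinear (fun a => F a b)) ->
  (forall j : 'I_p, nth 0 s' j = nth 0 s (sg j)) ->
  FpTN F L p s' q t m = FpTN F L p s q t m.
Proof.
move=> hF hs; rewrite /FpTN [RHS](reindex_inj (@ffun_perm_inj p m sg)).
apply: eq_bigr => f _; apply: eq_bigr => g _; congr L; apply: eq_map => i.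
exact/(hF _).1/partN_perm.
Qed.

Lemma perm_sigma s s' : perm_eq s s' ->
  exists sg : {perm 'I_(size s)}, forall j : 'I_(size s), nth 0 s' j = nth 0 s (sg j).
Proof.
rewrite perm_sym => hp; have /tuple_permP [sg e] : perm_eq s' (in_tuple s) by []; exists sg => j.
by rewrite e -(tnth_nth 0) tnth_mktuple (tnth_nth 0).
Qed.

Lemma Fp_lin_perm1 F L : (forall b, sym_multilinear (fun a => F a b)) ->
  forall s s' t, perm_eq s s' -> Fp_lin F L s t = Fp_lin F L s' t.
Proof.
move=> hF s s' t hp; have [sg hsg] := perm_sigma hp.
rewrite !Fp_linE -(perm_size hp); apply: eq_bigr => m _.
by congr (_ *: _); symmetry; apply: FpTN_perm1 hF hsg.
Qed.

Lemma Fp_lin_flip F L s t : Fp_lin F L s t = Fp_lin (fun a b => F b a) L t s.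
Proof.
rewrite !Fp_linE addnC; apply: eq_bigr => m _; congr (_ *: _).
by rewrite /FpTN exchange_big.
Qed.

Lemma Fp_lin_lin2 F L : (forall a, sym_multilinear (fun b => F a b)) ->
  sym_multilinear L -> forall s t1 t2 (a : k) x y,
  Fp_lin F L s (t1 ++ (a *: x + y) :: t2) =
  a *: Fp_lin F L s (t1 ++ x :: t2) + Fp_lin F L s (t1 ++ y :: t2).
Proof.
by move=> hF hL s t1 t2 a x y; rewrite !(Fp_lin_flip F) (@Fp_lin_lin1 (fun a b => F b a) L hF hL).
Qed.

Lemma Fp_lin_perm2 F L : (forall a, sym_multilinear (fun b => F a b)) ->
  forall s t t', perm_eq t t' -> Fp_lin F L s t = Fp_lin F L s t'.
Proof.
by move=> hF s t t' hp; rewrite !(Fp_lin_flip F) (@Fp_lin_perm1 (fun a b => F b a) L hF _ _ _ hp).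
Qed.

Lemma map_nth_enumN n s : size s = n -> [seq nth 0 s (val j) | j <- enum 'I_n] = s.
Proof. by move=> e; rewrite (map_comp (nth 0 s) val) val_enum_ord -e -/(mkseq _ _) mkseq_nth. Qed.

Section Core.
Variables (E : seq V -> seq V -> V) (L : seq V -> V) (a b : seq V).
Hypotheses (E00 : E [::] [::] = 0) (E10 : forall x, E [:: x] [::] = x)
  (E01 : forall x, E [::] [:: x] = x) (hL : sym_multilinear L).
Let p := size a.
Let q := size b.
Let n := (p + q)%N.
Definition fl (c : {ffun 'I_n -> 'I_n}) : {ffun 'I_p -> 'I_n} := [ffun j => c (lshift q j)].
Definition fr (c : {ffun 'I_n -> 'I_n}) : {ffun 'I_q -> 'I_n} := [ffun j => c (rshift p j)].
Definition fglue (fg : {ffun 'I_p -> 'I_n} * {ffun 'I_q -> 'I_n}) : {ffun 'I_n -> 'I_n} :=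
  [ffun j => match split j with inl j1 => fg.1 j1 | inr j2 => fg.2 j2 end].

Lemma core_bij : bijective (fun c => (fl c, fr c)).
Proof.
exists fglue.
  move=> c; apply/ffunP => j; rewrite !ffunE.
  by case: split_ordP => [j1 ->|j2 ->]; rewrite /= ffunE.
move=> [f g]; congr (_, _); apply/ffunP => j; rewrite !ffunE.
  by have := unsplitK (inl j : 'I_p + 'I_q) => /= ->.
by have := unsplitK (inr j : 'I_p + 'I_q) => /= ->.
Qed.

Lemma core_noninj (c : {ffun 'I_n -> 'I_n}) i : (forall j, c j != i) ->
  E (partN a (fl c) i) (partN b (fr c) i) = 0.
Proof.
move=> hc; rewrite !partN_none // => j; rewrite ffunE; exact: hc.
Qed.

Lemma core_entry (c : {ffun 'I_n -> 'I_n}) (injc : injective c) i :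
  E (partN a (fl c) i) (partN b (fr c) i) = nth 0 (a ++ b) (invF injc i).
Proof.
set j := invF injc i; have ci : c j = i by apply: f_invF.
case: (split_ordP j) => [j1 ej | j2 ej].
  rewrite (@partN_none _ _ _ (fr c)); last first.
    by move=> j'; rewrite ffunE -ci ej (inj_eq injc) eq_rlshift.
  rewrite /partN (@eq_filter _ _ (pred1 j1)); last first.
    by move=> j'; rewrite /= ffunE -ci ej (inj_eq injc) eq_lshift.
  rewrite filter_pred1_uniq ?enum_uniq ?mem_enum //= E10 ej nth_cat /=.
  by rewrite ltn_ord.
rewrite (@partN_none _ _ _ (fl c)); last first.
  by move=> j'; rewrite ffunE -ci ej (inj_eq injc) eq_lrshift.
rewrite /partN (@eq_filter _ _ (pred1 j2)); last first.
  by move=> j'; rewrite /= ffunE -ci ej (inj_eq injc) eq_rshift.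
rewrite filter_pred1_uniq ?enum_uniq ?mem_enum //= E01 ej nth_cat /=.
by rewrite ltnNge leq_addr /= addKn.
Qed.

Lemma core_sum : FpTN E L p a q b n = (n`!)%:R *: L (a ++ b).
Proof.
rewrite /FpTN pair_bigA /= (reindex _ (onW_bij _ core_bij)) /=.
rewrite (bigID (fun c : {ffun 'I_n -> 'I_n} => injectiveb c)) /= [X in _ + X]big1 ?addr0; last first.
  move=> c ninj; case: (pickP (fun i => [forall j, c j != i])) => [i /forallP hi | hnone].
    apply: (sm_mem0 hL); apply/mapP; exists i; first by rewrite mem_enum.
    by rewrite core_noninj.
  case/negP: ninj; apply/injectiveP => x y; apply: (@image_injP _ _ c 'I_n) => //.
  rewrite -/(codom c) card_ord; apply/eqP; rewrite -[RHS](card_ord n).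
  apply: eq_card => i; rewrite inE; have := hnone i; move/negbT.
  rewrite negb_forall => /existsP [j]; rewrite negbK => /eqP <-; exact: codom_f.
rewrite (eq_bigr (fun _ => L (a ++ b))); last first.
  move=> c /injectiveP injc; rewrite (eq_map (core_entry injc)); apply: hL.1.
  have hperm : perm_eq (map (invF injc) (enum 'I_n)) (enum 'I_n).
    apply: uniq_perm; rewrite ?(map_inj_uniq (can_inj (f_invF injc))) ?enum_uniq //.
    move=> j; rewrite mem_enum; apply/mapP; exists (c j); rewrite ?mem_enum //.
    by rewrite invF_f.
  rewrite (map_comp (fun j : 'I_n => nth 0 (a ++ b) (val j)) (invF injc)).
  by apply: (perm_trans (perm_map _ hperm)); rewrite map_nth_enumN // size_cat.
apply: (etrans (sumr_const [pred c : {ffun 'I_n -> 'I_n} | injectiveb c] _)).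
have -> : #|[pred c : {ffun 'I_n -> 'I_n} | injectiveb c]| =
   #|[set c : {ffun 'I_n -> 'I_n} | injectiveb c]| by apply: eq_card => c; rewrite inE.
by rewrite card_inj_ffuns card_ord ffactnn scaler_nat.
Qed.

End Core.

Lemma piV_big (l : seq V) : (2 <= size l)%N -> piV l = 0.
Proof. by case: l => [|x [|y l]]. Qed.

Lemma FpTN_small F L p s t m : sym_multilinear L ->
  (forall x, F x [::] = piV x) -> (m < p)%N ->
  FpTN F L p s 0 t m = 0.
Proof.
move=> hL hF hm; rewrite /FpTN big1 // => f _; apply: big1 => g _.
have : ~~ injectiveb f.
  apply/negP => /injectiveP /leq_card; rewrite !card_ord => hpm.
  by move: (leq_trans hm hpm); rewrite ltnn.
case/injectivePn => j1 [j2 hj e].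
apply: (sm_mem0 hL); apply/mapP; exists (f j1); first by rewrite mem_enum.
rewrite (@partN_none 0 _ _ g); last by case.
rewrite hF piV_big // size_map.
have -> : (2 = size [:: j1; j2])%N by [].
apply: uniq_leq_size; first by rewrite /= inE hj.
by move=> j; rewrite !inE mem_filter mem_enum => /orP [] /eqP ->; rewrite ?e eqxx.
Qed.

Section Char.
Hypothesis chark0 : [pchar k] =i pred0.

Lemma natf_neq0 n : (n%:R != 0 :> k) = (n != 0)%N.
Proof. by rewrite ((pcharf0P _).1 chark0). Qed.

Lemma fact_neq0 n : (n`!%:R != 0 :> k).
Proof. by rewrite natf_neq0 -lt0n fact_gt0. Qed.

Lemma Fp_lin_nil2 F L s : sym_multilinear L ->
  (forall x, F x [::] = piV x) -> (forall x, F [::] [:: x] = x) ->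
  Fp_lin F L s [::] = L s.
Proof.
move=> hL hF0 hF1; rewrite Fp_linE /= addn0 big_ord_recr /= big1 ?add0r; last first.
  by move=> i _; rewrite FpTN_small ?scaler0.
have := @core_sum F L s [::] (hF0 [::]) (fun x => hF0 [:: x]) hF1 hL.
rewrite /= addn0 cats0 => ->.
by rewrite scalerA mulVf ?fact_neq0 ?scale1r.
Qed.

End Char.

Lemma piV_n1 (l : seq V) : size l != 1%N -> piV l = 0.
Proof. by case: l => [|x [|y l]]. Qed.

Lemma sum_ffun1 p (T : {ffun 'I_p -> 'I_1} -> V) : \sum_f T f = T [ffun => ord0].
Proof.
rewrite (big_pred1 [ffun => ord0]) // => f /=; symmetry; apply/eqP/ffunP => j.
by rewrite ffunE; apply: ord1.
Qed.

Lemma FpTN_piV F s t m :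
  FpTN F (@piV _ V) (size s) s (size t) t m = if m == 1%N then F s t else 0.
Proof.
case: m => [|[|m]] /=.
- by rewrite /FpTN big1 // => f _; rewrite big1 // => g _; rewrite enum_ord0.
- rewrite /FpTN !sum_ffun1 enum_ordSl enum_ord0 /=.
  by rewrite !partN_all // => j; rewrite ffunE.
- rewrite /FpTN big1 // => f _; rewrite big1 // => g _.
  by rewrite piV_n1 // size_map size_enum_ord.
Qed.

Lemma Fp_lin_piV F s t : F [::] [::] = 0 -> Fp_lin F (@piV _ V) s t = F s t.
Proof.
move=> hF; rewrite Fp_linE.
under eq_bigr => i _ do rewrite FpTN_piV.
case e: (size s + size t)%N => [|n].
  rewrite big_ord1 /= scaler0.
  move: (e); move/eqP; rewrite addn_eq0 => /andP [/eqP/size0nil es /eqP/size0nil et].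
  by rewrite es et.
rewrite big_ord_recl big_ord_recl /= big1 ?addr0 ?scaler0 ?add0r ?invr1 ?scale1r //.
by move=> i _; rewrite scaler0.
Qed.


Definition LF F s p t (h : {ffun 'I_p -> 'I_2}) :=
  Fp_lin F (fun w => F w (partN t h ord_max)) s (partN t h ord0).
Definition RF F s p t (h : {ffun 'I_p -> 'I_2}) :=
  Fp_lin F (fun w => F s w) (partN t h ord0) (partN t h ord_max).
Definition Phi F s t := \sum_(h : {ffun 'I_(size t) -> 'I_2}) (LF F s t h - RF F s t h).

Lemma RA_Phi F : right_alternative F <-> forall s t, Phi F s t = 0.
Proof.
split=> H s t; first by rewrite /Phi sumrB; apply/eqP; rewrite subr_eq0; apply/eqP/H.
by apply/eqP; rewrite -subr_eq0 -sumrB; apply/eqP/H.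
Qed.

Lemma ord2_max (x : 'I_2) : (x == ord_max) = ~~ (x == ord0).
Proof. by case: x => [[|[|]]]. Qed.

Lemma partN2_perm p t (h : {ffun 'I_p -> 'I_2}) : size t = p ->
  perm_eq (partN t h ord0 ++ partN t h ord_max) t.
Proof.
move=> e; rewrite /partN -map_cat.
rewrite (@eq_filter _ (fun j => h j == ord_max) (predC (fun j => h j == ord0)));
  last by move=> j; rewrite /= ord2_max.
rewrite -[X in perm_eq _ X](map_nth_enumN e); apply: perm_map; by rewrite perm_filterC.
Qed.

Lemma partN2_size p t (h : {ffun 'I_p -> 'I_2}) : size t = p ->
  (size (partN t h ord0) + size (partN t h ord_max))%N = p.
Proof. by move=> e; rewrite -size_cat (perm_size (partN2_perm h e)). Qed.

Lemma partN_full p t m (h : {ffun 'I_p -> 'I_m}) i :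
  size (partN t h i) = p -> forall j, h j = i.
Proof.
rewrite size_map size_filter => e j; apply/eqP.
have : all (fun j => h j == i) (enum 'I_p) by rewrite all_count e size_enum_ord.
by move/allP; apply; rewrite mem_enum.
Qed.

Lemma FpTN_cong F F2 L L' p s q t m :
  (forall a b, (size a <= p)%N -> (size b <= q)%N -> F a b = F2 a b) ->
  (forall w, size w = m -> L w = L' w) ->
  FpTN F L p s q t m = FpTN F2 L' p s q t m.
Proof.
move=> hF hL; apply: eq_bigr => f _; apply: eq_bigr => g _.
rewrite hL; last by rewrite size_map -?enumT size_enum_ord.
apply: congr1; apply: eq_map => i.
by apply: hF; apply: partN_size.
Qed.

Lemma Fp_lin_cong F F2 L L' s t :
  (forall a b, (size a <= size s)%N -> (size b <= size t)%N -> F a b = F2 a b) ->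
  (forall w, (size w <= size s + size t)%N -> L w = L' w) ->
  Fp_lin F L s t = Fp_lin F2 L' s t.
Proof.
move=> hF hL; rewrite !Fp_linE; apply: eq_bigr => m _; congr (_ *: _).
by apply: FpTN_cong => // w e; apply: hL; rewrite e -ltnS.
Qed.

Lemma Fp_lin_L0 F L s t : (forall w, L w = 0) -> Fp_lin F L s t = 0.
Proof.
move=> hL; rewrite Fp_linE big1 // => m _; rewrite /FpTN big1 ?scaler0 // => f _.
by rewrite big1.
Qed.

Lemma Phi_loc F F2 s t : (forall a b, (size b <= size t)%N -> F a b = F2 a b) ->
  Phi F s t = Phi F2 s t.
Proof.
move=> hFG; apply: eq_bigr => h _.
have hs := partN2_size h (erefl (size t)).
have s0 := partN_size t h ord0; have s1 := partN_size t h ord_max.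
congr (_ - _).
  apply: Fp_lin_cong => [a b _ hb|w hw]; apply: hFG.
    exact: (leq_trans hb).
  done.
apply: Fp_lin_cong => [a b _ hb|w hw]; apply: hFG.
  exact: (leq_trans hb).
by rewrite hs in hw.
Qed.

Definition trunc n F : seq V -> seq V -> V :=
  fun a b => if (size b < n)%N then F a b else 0.

Lemma Fp_lin_eqL F L L' s t : (forall w, L w = L' w) -> Fp_lin F L s t = Fp_lin F L' s t.
Proof. by move=> hL; apply: Fp_lin_cong. Qed.

Lemma alg_key (v S R w : V) :
  v + (v + S) - (R + (v + v + w)) + w = 0 + (0 + S) - R.
Proof.
rewrite !add0r opprD addrA (opprD (v + v)) addrA addrNK.
by rewrite addrAC addrA opprD addrA [v + v + S - v]addrAC addrK [v + S - v]addrAC subrr add0r.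
Qed.

Section Key.
Hypothesis chark0 : [pchar k] =i pred0.

Lemma key F s t : unital_formal_mul F -> (2 <= size t)%N ->
  Phi F s t + ((2 ^ size t - 2)%N)%:R *: F s t = Phi (trunc (size t) F) s t.
Proof.
case=> hB h00 hs0 h0s ht; set n := size t in ht *; set tF := trunc n F.
have hn : n = size t by [].
have RFa : forall h : {ffun 'I_n -> 'I_2}, RF F s t h = RF tF s t h + F s t.
  move=> h; have hab := partN2_size h hn.
  have sa := partN_size t h ord0; have sb := partN_size t h ord_max.
  rewrite /RF !Fp_linE !big_ord_recr /= -addrA; congr (_ + _).
    apply: eq_bigr => i _; congr (_ *: _); apply: FpTN_cong => [a b ha hb|w hw].
      rewrite /tF /trunc; case: ltnP => // hb'.
      have ha0 : (size a <= 0)%N by lia.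
      by move: ha0; rewrite leqn0 => /nilP ->; rewrite h0s piV_big // (leq_trans ht).
    have hi : (i < n)%N by apply: (leq_trans (ltn_ord i)); rewrite hab.
    by rewrite /tF /trunc hw hi.
  have := @core_sum F (F s) (partN t h ord0) (partN t h ord_max) h00
    (fun x => hs0 [:: x]) (fun x => h0s [:: x]) ((hB.2 s)) => ->.
  rewrite scalerA mulVf ?fact_neq0 // scale1r ((hB.2 s).1 _ _ (partN2_perm h hn)).
  rewrite /FpTN big1 ?scaler0 ?add0r // => f _; rewrite big1 // => g _.
  have hN : ~~ (size (partN t h ord0) + size (partN t h ord_max) < n)%N by rewrite hab ltnn.
  by rewrite /tF /trunc size_map -?enumT size_enum_ord (negbTE hN).
pose h0 : {ffun 'I_n -> 'I_2} := [ffun => ord0].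
pose h1 : {ffun 'I_n -> 'I_2} := [ffun => ord_max].
have h10 : h1 != h0.
  by apply/eqP => /ffunP /(_ (Ordinal (ltnW ht))); rewrite !ffunE.
have e0 : partN t h0 ord0 = t by apply: partN_all => // j; rewrite ffunE.
have e1 : partN t h0 ord_max = [::] by apply: partN_none => j; rewrite ffunE.
have e0' : partN t h1 ord0 = [::] by apply: partN_none => j; rewrite ffunE.
have e1' : partN t h1 ord_max = t by apply: partN_all => // j; rewrite ffunE.
have tF00 : tF [::] [::] = 0 by rewrite /tF /trunc /= (ltnW ht).
have LF0 : LF F s t h0 = F s t.
  by rewrite /LF e0 e1 (@Fp_lin_eqL F _ (@piV _ V)) ?Fp_lin_piV.
have LT0 : LF tF s t h0 = 0.
  rewrite /LF e0 e1 (@Fp_lin_eqL tF _ (@piV _ V)) ?Fp_lin_piV //.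
    by rewrite /tF /trunc ltnn.
  by move=> w; rewrite /tF /trunc /= (ltnW ht).
have LF1 : LF F s t h1 = F s t.
  by rewrite /LF e0' e1' (@Fp_lin_nil2 chark0 F (fun w => F w t) s (hB.1 t) hs0) // => x; rewrite h0s.
have LT1 : LF tF s t h1 = 0.
  by rewrite /LF e0' e1' Fp_lin_L0 // => w; rewrite /tF /trunc ltnn.
have hrest : forall h, h != h0 -> h != h1 -> LF F s t h = LF tF s t h.
  move=> h hh0 hh1.
  have lt0 : (size (partN t h ord0) < n)%N.
    rewrite ltn_neqAle partN_size andbT; apply: contra hh0 => /eqP e.
    by apply/eqP/ffunP => j; rewrite ffunE; exact: partN_full e j.
  have lt1 : (size (partN t h ord_max) < n)%N.
    rewrite ltn_neqAle partN_size andbT; apply: contra hh1 => /eqP e.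
    by apply/eqP/ffunP => j; rewrite ffunE; exact: partN_full e j.
  rewrite /LF; apply: Fp_lin_cong => [a b _ hb|w _].
    by rewrite /tF /trunc (leq_ltn_trans hb lt0).
  by rewrite /tF /trunc lt1.
rewrite /Phi !sumrB (eq_bigr _ (fun h _ => RFa h)) big_split /= sumr_const card_ffun !card_ord.
rewrite (bigD1 h0) //= (bigD1 h1) /=; last by rewrite h10.
rewrite [in RHS](bigD1 h0) //= [in RHS](bigD1 h1) /=; last by rewrite h10.
rewrite LF0 LF1 LT0 LT1.
rewrite (eq_bigr (fun h => LF tF s t h)); last by move=> h /andP [? ?]; apply: hrest.
have e2 : (2 ^ n = 2 + (2 ^ n - 2))%N.
  by rewrite subnKC // -[X in (X <= _)%N]/(2 ^ 1)%N leq_pexp2l // ltnW.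
by rewrite scaler_nat {1}e2 mulrnDr mulr2n alg_key.
Qed.
End Key.

Section PhiProps.
Hypothesis chark0 : [pchar k] =i pred0.

Lemma Fp_lin_nil1 F L t : sym_multilinear L ->
  (forall x, F [::] x = piV x) -> (forall x, F [:: x] [::] = x) ->
  Fp_lin F L [::] t = L t.
Proof.
move=> hL h1 h2; rewrite Fp_lin_flip.
exact: (@Fp_lin_nil2 chark0 (fun a b => F b a) L t hL h1 h2).
Qed.

Lemma term0 F s a b : unital_formal_mul F -> a = [::] \/ b = [::] ->
  Fp_lin F (fun w => F w b) s a - Fp_lin F (fun w => F s w) a b = 0.
Proof.
case=> hB h00 hs0 h0s [->|->]; apply/eqP; rewrite subr_eq0; apply/eqP.
  rewrite (@Fp_lin_nil2 chark0 F (fun w => F w b) s (hB.1 b) hs0 (fun x => h0s [:: x])).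
  by rewrite (@Fp_lin_nil1 F (fun w => F s w) b (hB.2 s) h0s (fun x => hs0 [:: x])).
rewrite (@Fp_lin_eqL F _ (@piV _ V)) ?Fp_lin_piV //.
by rewrite (@Fp_lin_nil2 chark0 F (fun w => F s w) a (hB.2 s) hs0 (fun x => h0s [:: x])).
Qed.

Lemma Phi_small F s t : unital_formal_mul F -> (size t <= 1)%N -> Phi F s t = 0.
Proof.
move=> hU ht; apply: big1 => h _; apply: term0 => //.
have := partN2_size h (erefl (size t)).
case: (partN t h ord0) => [|x a]; first by left.
case: (partN t h ord_max) => [|y b]; first by right.
by move=> e; move: ht; rewrite -e /= addnS ltnS.
Qed.

Lemma Phi_nil F t : unital_formal_mul F -> Phi F [::] t = 0.
Proof.
case=> hB h00 hs0 h0s; apply: big1 => h _; apply/eqP; rewrite subr_eq0; apply/eqP.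
rewrite /LF /RF (@Fp_lin_nil1 F _ _ (hB.1 _) h0s (fun x => hs0 [:: x])).
by rewrite (@Fp_lin_eqL F _ (@piV _ V)) ?Fp_lin_piV.
Qed.
End PhiProps.

Lemma algB (a : k) (X Y X' Y' : V) : (a *: X + Y) - (a *: X' + Y') = a *: (X - X') + (Y - Y').
Proof. by rewrite opprD addrACA scalerBr. Qed.

Lemma Phi_sm1 F t : bilin_on_kV F -> sym_multilinear (fun s => Phi F s t).
Proof.
move=> hB; split.
  move=> s s' hp; apply: eq_bigr => h _; congr (_ - _).
    exact: (Fp_lin_perm1 _ hB.1).
  by apply: Fp_lin_eqL => w; apply: (hB.1 w).1.
move=> s1 s2 a x y; rewrite /Phi scaler_sumr -big_split; apply: eq_bigr => h _ /=.
rewrite /LF /RF (Fp_lin_lin1 hB.1 (hB.1 _)).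
by rewrite (@Fp_lin_linL F (fun w => F (s1 ++ (a *: x + y) :: s2) w) (fun w => F (s1 ++ x :: s2) w) (fun w => F (s1 ++ y :: s2) w) _ _ a)
  ?algB // => w; apply: (hB.1 w).2.
Qed.

Definition PhiN F s p t := \sum_(h : {ffun 'I_p -> 'I_2}) (LF F s t h - RF F s t h).

Lemma Phi_sm2 F s : bilin_on_kV F -> sym_multilinear (fun t => Phi F s t).
Proof.
move=> hB; split.
  move=> t t' hp; have [sg hsg] := perm_sigma hp.
  rewrite -[Phi F s t]/(PhiN F s (size t) t) -[Phi F s t']/(PhiN F s (size t') t').
  rewrite -(perm_size hp) /PhiN [LHS](reindex_inj (@ffun_perm_inj _ 2 sg)).
  apply: eq_bigr => h _ /=; symmetry.
  have pe := fun i => @partN_perm _ t t' sg 2 h i hsg.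
  congr (_ - _).
    rewrite /LF (Fp_lin_perm2 _ hB.2 s (pe ord0)); apply: Fp_lin_eqL => w.
    exact: (hB.2 w).1 (pe ord_max).
  by rewrite /RF (Fp_lin_perm1 _ hB.1 _ (pe ord0)) (Fp_lin_perm2 _ hB.2 _ (pe ord_max)).
move=> t1 t2 a x y; rewrite /Phi !size_cat /= scaler_sumr -big_split.
apply: eq_bigr => h _ /=.
have [P1 [P2 hP]] := @partN_mid t1 t2 _ h.
case: (boolP (h (j0 t1 t2) == ord0)) => hj.
  rewrite (eqP hj) in hP.
  have hne : ord_max != h (j0 t1 t2) by rewrite (eqP hj).
  rewrite /LF /RF !hP (partN_other (a *: x + y) 0 hne) (partN_other x 0 hne)
    (partN_other y 0 hne).
  by rewrite (Fp_lin_lin2 hB.2 (hB.1 _)) (Fp_lin_lin1 hB.1 (hB.2 _)) algB.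
have hj' : h (j0 t1 t2) = ord_max by apply/eqP; rewrite ord2_max.
rewrite hj' in hP.
have hne : ord0 != h (j0 t1 t2) by rewrite hj'.
rewrite /LF /RF !hP (partN_other (a *: x + y) 0 hne) (partN_other x 0 hne)
  (partN_other y 0 hne).
rewrite (Fp_lin_lin2 hB.2 (hB.2 _)).
rewrite (@Fp_lin_linL F (fun w => F w (P1 ++ (a *: x + y) :: P2))
  (fun w => F w (P1 ++ x :: P2)) (fun w => F w (P1 ++ y :: P2)) _ _ a) ?algB //.
by move=> w; apply: (hB.2 w).2.
Qed.

Lemma sm_if (P : nat -> bool) G1 G2 : sym_multilinear G1 -> sym_multilinear G2 ->
  sym_multilinear (fun t => if P (size t) then G1 t else G2 t).
Proof.
move=> h1 h2; split.
  by move=> t t' hp; rewrite (perm_size hp); case: (P _); [apply: h1.1|apply: h2.1].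
by move=> t1 t2 a x y; rewrite !size_cat /=; case: (P _); [apply: h1.2|apply: h2.2].
Qed.

Lemma sm_scale (c : k) G : sym_multilinear G -> sym_multilinear (fun t => c *: G t).
Proof.
move=> h; split; first by move=> t t' hp; rewrite (h.1 _ _ hp).
by move=> t1 t2 a x y; rewrite h.2 scalerDr !scalerA mulrC.
Qed.

Lemma sm_0 : sym_multilinear (fun _ : seq V => (0 : V)).
Proof. by split => // *; rewrite scaler0 addr0. Qed.

Lemma d_neq0 (chark0 : [pchar k] =i pred0) n : (2 <= n)%N -> ((2 ^ n - 2)%N%:R : k) != 0.
Proof.
move=> hn; rewrite natf_neq0 // subn_eq0 -ltnNge.
by rewrite -[X in (X < _)%N]/(2 ^ 1)%N ltn_exp2l.
Qed.

Section Construct.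
Hypothesis chark0 : [pchar k] =i pred0.
Variable F : seq V -> seq V -> V.
Hypothesis hU : unital_formal_mul F.

Fixpoint Gk (n : nat) : seq V -> seq V -> V :=
  match n with
  | 0 => trunc 2 F
  | n'.+1 => fun s t => if size t == n'.+2 then
      ((2 ^ n'.+2 - 2)%N%:R)^-1 *: Phi (Gk n') s t else Gk n' s t
  end.

Lemma G_step n a b : size b != n.+2 -> Gk n.+1 a b = Gk n a b.
Proof. by move=> h; rewrite /= (negbTE h). Qed.

Lemma G_unital n : unital_formal_mul (Gk n).
Proof.
case: hU => hB h00 hs0 h0s.
elim: n => [|n [hB' h00' hs0' h0s']].
  split.
  - split=> t; last by apply: (sm_if (fun m => m < 2)%N (hB.2 t) sm_0).
    rewrite /= /trunc; case: (size t < 2)%N; [exact: (hB.1 t)|exact: sm_0].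
  - by rewrite /= /trunc /=.
  - by move=> s; rewrite /= /trunc /= hs0.
  - move=> t; rewrite /= /trunc h0s; case: ltnP => // ht.
    by rewrite piV_big.
split.
- split=> t.
    rewrite /=; case: (size t == n.+2); first exact/sm_scale/Phi_sm1.
    exact: hB'.1.
  apply: (sm_if (fun m => m == n.+2) (sm_scale _ (Phi_sm2 _ hB')) (hB'.2 t)).
- by rewrite /=.
- by move=> s; rewrite /= hs0'.
- move=> t; rewrite /=; case: eqP => ht; last exact: h0s'.
  by rewrite Phi_nil // scaler0 piV_big // ht.
Qed.

Lemma G_zero n a b : (n.+1 < size b)%N -> Gk n a b = 0.
Proof.
elim: n => [|n IH] hb; first by rewrite /= /trunc ltnNge hb.
rewrite G_step; first by apply: IH; exact: ltnW.
by rewrite neq_ltn hb orbT.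
Qed.

Lemma G_low n a b : (size b <= 1)%N -> Gk n a b = F a b.
Proof.
move=> hb; elim: n => [|n IH]; first by rewrite /= /trunc (leq_ltn_trans hb).
rewrite G_step // neq_ltn (leq_ltn_trans hb) //.
Qed.

Lemma G_stab j m a b : (size b <= j.+1)%N -> (j <= m)%N -> Gk j a b = Gk m a b.
Proof.
move=> hb; elim: m => [|m IH]; first by rewrite leqn0 => /eqP ->.
rewrite leq_eqVlt => /orP [/eqP -> //|hj].
rewrite G_step; first by apply: IH.
by rewrite neq_ltn (leq_ltn_trans hb) // ltnS.
Qed.

Lemma G_RA n s t : (size t <= n.+1)%N -> Phi (Gk n) s t = 0.
Proof.
elim: n s t => [|n IH] s t ht; first exact: Phi_small (G_unital 0) ht.
case: (boolP (size t == n.+2)) => hs; last first.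
  have htl : (size t < n.+2)%N by move: ht; rewrite leq_eqVlt (negbTE hs).
  rewrite (@Phi_loc _ (Gk n)) ?IH //.
  by move=> a b hb; apply: G_step; rewrite neq_ltn (leq_ltn_trans hb).
have ht2 : (2 <= size t)%N by rewrite (eqP hs).
have := key chark0 s (G_unital n.+1) ht2.
have eG : Gk n.+1 s t = ((2 ^ n.+2 - 2)%N%:R)^-1 *: Phi (Gk n) s t by rewrite /= hs.
rewrite eG (eqP hs) scalerA mulfV ?scale1r; last by rewrite d_neq0.
rewrite (@Phi_loc (trunc n.+2 (Gk n.+1)) (Gk n) s t); last first.
  move=> a b hb; rewrite /trunc; case: ifP => hb'.
    by rewrite G_step // neq_ltn hb'.
  by rewrite G_zero // ltnNge -ltnS hb'.
by move/(canRL (addrK _)); rewrite subrr.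
Qed.

Definition F0 s t := Gk (size t) s t.

Lemma F0_unital : unital_formal_mul F0.
Proof.
split.
- split=> t; first by case: (G_unital (size t)) => hB _ _ _; exact: hB.1 t.
  split.
    move=> u u' hp; rewrite /F0 -(perm_size hp).
    by case: (G_unital (size u)) => hB _ _ _; exact: (hB.2 t).1.
  move=> t1 t2 a x y; rewrite /F0 !size_cat /=.
  by case: (G_unital (size t1 + (size t2).+1)) => hB _ _ _; exact: (hB.2 t).2.
- by case: (G_unital 0).
- by move=> s; case: (G_unital 0) => _ _ h _; exact: h.
- by move=> s; case: (G_unital (size s)) => _ _ _ h; exact: h.
Qed.

Lemma F0_similar : similar_fm F0 F.
Proof. by move=> s y; rewrite /F0 G_low. Qed.

Lemma F0_RA : right_alternative F0.
Proof.
apply/RA_Phi => s t; rewrite (@Phi_loc _ (Gk (size t))) ?G_RA //.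
by move=> a b hb; rewrite /F0 (@G_stab (size b) (size t)).
Qed.
End Construct.

Lemma uniq_RA (chark0 : [pchar k] =i pred0) F1 F2 :
  unital_formal_mul F1 -> right_alternative F1 ->
  unital_formal_mul F2 -> right_alternative F2 ->
  (forall s y, F1 s [:: y] = F2 s [:: y]) -> forall s t, F1 s t = F2 s t.
Proof.
move=> hU1 /RA_Phi hR1 hU2 /RA_Phi hR2 hsim s t.
elim: (size t) {-2}t s (leqnn (size t)) => [|n IH] u s hu.
  move: hu; rewrite leqn0 => /nilP ->.
  by case: hU1 => _ _ -> _; case: hU2 => _ _ -> _.
case: (boolP (size u <= n)%N) => hun; first exact: IH.
have hu1 : size u = n.+1 by apply/eqP; rewrite eqn_leq hu ltnNge hun.
case: n IH hu hun hu1 => [|n] IH hu hun hu1.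
  by case: u hu1 {hu hun} => [|y [|]] //= _; apply: hsim.
have ht2 : (2 <= size u)%N by rewrite hu1.
have k1 := key chark0 s hU1 ht2; have k2 := key chark0 s hU2 ht2.
rewrite hR1 add0r in k1; rewrite hR2 add0r in k2.
apply: (scalerI (d_neq0 chark0 ht2)); rewrite k1 k2.
apply: Phi_loc => a b hb; rewrite /trunc; case: ltnP => // hb'.
by apply: IH; rewrite -ltnS -hu1.
Qed.

End Main.

Theorem mainTheorem4 (k : fieldType) (chark0 : [pchar k] =i pred0)
  (V : lmodType k) (F : seq V -> seq V -> V) :
  unital_formal_mul F ->
  exists F0 : seq V -> seq V -> V,
    [/\ unital_formal_mul F0, right_alternative F0 & similar_fm F0 F] /\
    (forall F1 : seq V -> seq V -> V,
       unital_formal_mul F1 -> right_alternative F1 -> similar_fm F1 F ->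
       forall s t, F1 s t = F0 s t).
Proof.
move=> hU; exists (F0 F).
have U0 := F0_unital chark0 hU; have R0 := F0_RA chark0 hU.
split; first by split => //; apply: F0_similar.
move=> F1 hU1 hR1 hS1 s t; apply: (uniq_RA chark0 hU1 hR1 U0 R0) => s' y.
by rewrite hS1 F0_similar.
Qed.
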